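(* Let $\mathcal{H}$ be an unrestricted tree-to-tree Hennie machine with input alphabet $\Xi$ and $\mathcal{R}$ a bottom-up relabeler from $\Sigma$ to $\Xi$. One can effectively construct a uTHM $\mathcal{H}'$ with input alphabet $\Sigma$ such that $[\![\mathcal{H}']\!]=[\![\mathcal{H}]\!]\circ[\![\mathcal{R}]\!]$. Moreover, for every $L\subseteq T_\Sigma$, if $\mathcal{H}$ is bounded-visit on $[\![\mathcal{R}]\!](L)$, then $\mathcal{H}'$ is bounded-visit on $L$.
   Context: Trees: ranked alphabets are finite sets with a rank function to $\mathbb{N}$; $T_\Sigma$ is the set of finite ordered $\Sigma$-labeled trees where a node labeled $\sigma$ has $\mathrm{rank}(\sigma)$ children (nodes are words over positive integers, root $\varepsilon$, $i$-th child of $u$ is $ui$); $T_\Sigma[Y]$ allows extra rank-$0$ leaves labeled in $Y$. A bottom-up relabeler $\mathcal{R}$ from $\Sigma$ to $\Xi$ consists of a deterministic bottom-up tree automaton (finite states $P$, maps $\delta[\sigma]:P^{\mathrm{rank}\sigma}\to P$, extended to trees by $\delta[\sigma(t_1,..,t_k)]=\delta[\sigma](\delta[t_1],..,\delta[t_k])$) and a rank-preserving map $\rho:\Sigma\times P\to\Xi$; $[\![\mathcal{R}]\!](\sigma(t_1,..,t_k))=\rho(\sigma,\delta[\sigma(t_1,..,t_k)])([\![\mathcal{R}]\!](t_1),..,[\![\mathcal{R}]\!](t_k))$. Hennie machines: a uTHM is $(Q,M,\top,\Sigma,\Gamma,q_{init},\delta)$ with finite states $Q$, finite memory symbols $M\ni\top$,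 $q_{init}\in Q$, partial $\delta:Q\times\Sigma\times M\rightharpoonup T_\Gamma[Q\times M\times D]$, $D=\{\uparrow,1,..,\max\mathrm{rank}\Sigma\}$, leaves $(q',m',d)$ of $\delta(q,\sigma,m)$ having $d\in\{\uparrow,1,..,\mathrm{rank}\sigma\}$. Configurations on $t$ are $(u,q,\mu)$, $\mu:$ nodes$\to M$, initially $(\varepsilon,q_{init},\text{constant }\top)$; the step of $(u,q,\mu)$ is $\delta(q,\mathrm{lab}_t(u),\mu(u))$ with each leaf $(q',m',d)$ replaced by $(ud,q',\mu[u\mapsto m'])$ ($ud$ the parent if $d=\uparrow$, else the $d$-th child; undefined if nonexistent). Confluent rewriting of configuration leaves by steps from the initial configuration yields the output in $T_\Gamma$, if any. A branch-outputting run is $C_0,..,C_n$ with $C_0$ initial and $C_{i+1}$ a leaf label of the step of $C_i$. The machine is bounded-visit on $L$ if some $N$ bounds, for all $t\in L$, runs on $t$ and nodes $u$, the number of $i$ with $C_i$ positioned at $u$. *)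

(* Defs.v *)
From mathcomp Require Import all_boot.
From Stdlib Require Import Relations.
From Stdlib Require List.

Set Implicit Arguments.
Unset Strict Implicit.
Unset Printing Implicit Defensive.

Record rankedAlphabet := RankedAlphabet {
  sym :> finType;
  rank : sym -> nat
}.

(* finite ordered labelled trees (not yet constrained by ranks) *)
Inductive tree (A : Type) : Type := Node of A & seq (tree A).
Arguments Node {A}.

Fixpoint wr (A : Type) (rk : A -> nat) (t : tree A) : bool :=
  let: Node a ts := t in
  (size ts == rk a) &&
  (fix wrs (l : seq (tree A)) : bool :=
     match l with [::] => true | s :: l' => wr rk s && wrs l' end) ts.

Definition inT (S : rankedAlphabet) (t : tree S) : bool := wr (@rank S) t.

Definition rankY (G : rankedAlphabet) (Y : Type) (x : G + Y) : nat :=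
  match x with inl g => rank g | inr _ => 0 end.
Definition inTY (G : rankedAlphabet) (Y : Type) (t : tree (G + Y)) : bool :=
  wr (@rankY G Y) t.

Fixpoint tmap (A B : Type) (f : A -> B) (t : tree A) : tree B :=
  let: Node a ts := t in
  Node (f a) ((fix go (l : seq (tree A)) : seq (tree B) :=
                 match l with [::] => [::] | s :: l' => tmap f s :: go l' end) ts).

Fixpoint labels (A : Type) (t : tree A) : seq A :=
  let: Node a ts := t in
  a :: (fix go (l : seq (tree A)) : seq A :=
          match l with [::] => [::] | s :: l' => labels s ++ go l' end) ts.

(* nodes are words over positive integers; the i-th child of u is rcons u i *)
Fixpoint subtree (A : Type) (t : tree A) (u : seq nat) : option (tree A) :=
  match u with
  | [::] => Some t
  | i :: u' =>
      let: Node _ ts := t in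
      match i with
      | 0 => None
      | i'.+1 => if i' < size ts then subtree (nth t ts i') u' else None
      end
  end.

Definition lab (A : Type) (t : tree A) (u : seq nat) : option A :=
  omap (fun s => let: Node a _ := s in a) (subtree t u).

Record relabeler (S X : rankedAlphabet) := Relabeler {
  rl_P : finType;
  (* delta[sigma] : P^(rank sigma) -> P, given on state sequences
     (only applied to sequences of length rank sigma on ranked trees) *)
  rl_delta : S -> seq rl_P -> rl_P;
  rl_rho : S -> rl_P -> X
}.
Arguments rl_delta {S X} r _ _.
Arguments rl_rho {S X} r _ _.

Definition wf_relabeler (S X : rankedAlphabet) (R : relabeler S X) : Prop :=
  forall (s : S) (p : rl_P R), rank (rl_rho R s p) = rank s.

Fixpoint rl_state (S X : rankedAlphabet) (R : relabeler S X) (t : tree S)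
  : rl_P R :=
  let: Node s ts := t in
  rl_delta R s ((fix go (l : seq (tree S)) : seq (rl_P R) :=
                   match l with [::] => [::] | t' :: l' => rl_state R t' :: go l' end) ts).

Fixpoint relabel (S X : rankedAlphabet) (R : relabeler S X) (t : tree S)
  : tree X :=
  let: Node s ts := t in
  Node (rl_rho R s (rl_state R t))
       ((fix go (l : seq (tree S)) : seq (tree X) :=
           match l with [::] => [::] | t' :: l' => relabel R t' :: go l' end) ts).

(* Directions D: None = "up", Some i = i-th child (1-based). *)
Definition dir := option nat.

Record uTHM (S G : rankedAlphabet) := UTHM {
  th_Q : finType;
  th_M : finType;
  th_top : th_M;
  th_qinit : th_Q;
  th_delta : th_Q -> S -> th_M -> option (tree (G + (th_Q * th_M * dir)))
}.
Arguments th_top {S G} u.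
Arguments th_qinit {S G} u.
Arguments th_delta {S G} u _ _ _.

Definition wf_uTHM (S G : rankedAlphabet) (H : uTHM S G) : Prop :=
  forall q (s : S) m r, th_delta H q s m = Some r ->
    inTY r /\
    forall q' m' d, List.In (inr (q', m', d)) (labels r) ->
      if d is Some i then (1 <= i <= rank s) else true.

Section Semantics.
Variables (S G : rankedAlphabet) (H : uTHM S G).

Definition config : Type := (seq nat * th_Q H * (seq nat -> th_M H))%type.

Definition init_config : config := ([::], th_qinit H, fun _ => th_top H).

Definition move (t : tree S) (u : seq nat) (d : dir) : option (seq nat) :=
  match d with
  | None => if u is [::] then None else Some (take (size u).-1 u)
  | Some i => if subtree t (rcons u i) is Some _ then Some (rcons u i) else None
  end.

Definition upd (mu : seq nat -> th_M H) (u : seq nat) (m : th_M H) :=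
  fun w => if w == u then m else mu w.

(* config trees: output symbols, and leaves carrying configurations
   (inr None marks an undefined configuration) *)
Definition ctree := tree (G + option config).

Definition step (t : tree S) (c : config) : option ctree :=
  let: (u, q, mu) := c in
  match lab t u with
  | None => None
  | Some s =>
      match th_delta H q s (mu u) with
      | None => None
      | Some r =>
          Some (tmap (fun x => match x with
                               | inl g => inl g
                               | inr (q', m', d) =>
                                   inr (omap (fun u' => (u', q', upd mu u m'))
                                             (move t u d))
                               end) r)
      end
  end.

Inductive rew1 (t : tree S) : ctree -> ctree -> Prop :=
| rew_leaf c ts r : step t c = Some r -> rew1 t (Node (inr (Some c)) ts) r
| rew_ctx a l s s' l' : rew1 t s s' ->
    rew1 t (Node a (l ++ s :: l')) (Node a (l ++ s' :: l')).

Definition sem (t : tree S) (o : tree G) : Prop :=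
  clos_refl_trans _ (rew1 t) (Node (inr (Some init_config)) [::])
                  (tmap (fun g => inl g) o).

Definition is_run (t : tree S) (cs : seq config) : Prop :=
  (exists c0 cs', cs = c0 :: cs' /\ c0 = init_config) /\
  forall i, i.+1 < size cs ->
    exists r, step t (nth init_config cs i) = Some r /\
      List.In (inr (Some (nth init_config cs i.+1))) (labels r).

Definition pos (c : config) : seq nat := c.1.1.

Definition bounded_visit (L : tree S -> Prop) : Prop :=
  exists N : nat, forall t, L t -> forall cs, is_run t cs ->
    forall u : seq nat, count (fun c => pos c == u) cs <= N.

End Semantics.

(* Main.v *)
Require Import Defs.
From mathcomp Require Import all_boot zify.
From Stdlib Require Import Relations FunctionalExtensionality.
From Stdlib Require List.

Set Implicit Arguments.
Unset Strict Implicit.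
Unset Printing Implicit Defensive.

Lemma In_cat T (x : T) (s1 s2 : seq T) :
  List.In x (s1 ++ s2) <-> List.In x s1 \/ List.In x s2.
Proof. elim: s1 => [|y s1 IH] /=; [tauto | rewrite IH; tauto]. Qed.

Section TreeGen.
Variable A : Type.

Lemma tree_ind2 (P : tree A -> Prop) :
  (forall a ts, List.Forall P ts -> P (Node a ts)) -> forall t, P t.
Proof.
move=> IH; fix F 1 => -[a ts]; apply: IH.
elim: ts => [|x l Hl]; [exact: List.Forall_nil | exact: List.Forall_cons (F x) Hl].
Qed.

Lemma Forall_nth (P : tree A -> Prop) ts d j :
  List.Forall P ts -> j < size ts -> P (nth d ts j).
Proof.
elim: ts j => [|x l IH] [|j] //= HF; inversion HF; subst => //.
by move=> Hj; apply: IH.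
Qed.

Lemma tmapE B (f : A -> B) a ts : tmap f (Node a ts) = Node (f a) (map (tmap f) ts).
Proof. by rewrite /=; congr Node; elim: ts => //= x l ->. Qed.

Lemma labelsE a ts : labels (Node a ts) = a :: flatten (map (@labels A) ts).
Proof. by rewrite /=; congr cons; elim: ts => //= x l ->. Qed.

Lemma wrE (rk : A -> nat) a ts : wr rk (Node a ts) = (size ts == rk a) && all (wr rk) ts.
Proof. by rewrite /=; congr andb; elim: ts => //= x l ->. Qed.

Lemma tmap_comp B C (f : B -> C) (g : A -> B) t :
  tmap f (tmap g t) = tmap (fun x => f (g x)) t.
Proof.
elim/tree_ind2: t => a ts IH; rewrite !tmapE; congr Node.
elim: ts IH => //= x l IHl HF; move/List.Forall_cons_iff: HF => [H1 H2]; congr cons; auto.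
Qed.

Lemma tmap_ext B (f g : A -> B) t :
  (forall x, List.In x (labels t) -> f x = g x) -> tmap f t = tmap g t.
Proof.
elim/tree_ind2: t => a ts IH Hx; rewrite !tmapE labelsE in Hx *.
congr Node; first by apply: Hx; left.
elim: ts IH Hx => //= x l IHl HF Hx; move/List.Forall_cons_iff: HF => [H1 H2]; congr cons.
  by apply: H1 => y Hy; apply: Hx; right; apply/In_cat; left.
apply: IHl => // y [<-|Hy]; first by apply: Hx; left.
by apply: Hx; right; apply/In_cat; right.
Qed.

Lemma in_labels_tmap B (f : A -> B) t y :
  List.In y (labels (tmap f t)) -> exists x, List.In x (labels t) /\ y = f x.
Proof.
elim/tree_ind2: t => a ts IH; rewrite tmapE !labelsE /= => -[<-|]; first by exists a; split=> //; left.
elim: ts IH => //= x l IHl HF; move/List.Forall_cons_iff: HF => [H1 H2].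
move/In_cat => [/H1 [z [Hz ->]]|/(IHl H2) [z [[<-|Hz] ->]]].
- by exists z; split=> //; right; apply/In_cat; left.
- by exists a; split=> //; left.
- by exists z; split=> //; right; apply/In_cat; right.
Qed.

Lemma in_tmap_labels B (f : A -> B) t x :
  List.In x (labels t) -> List.In (f x) (labels (tmap f t)).
Proof.
elim/tree_ind2: t => a ts IH; rewrite tmapE !labelsE /= => -[->|]; first by left.
move=> Hx; right; elim: ts IH Hx => //= y l IHl HF; move/List.Forall_cons_iff: HF => [H1 H2].
move/In_cat => [Hx|Hx]; apply/In_cat; [left; exact: H1 | right; exact: IHl].
Qed.



Lemma subtree_cat (t : tree A) u tu v :
  subtree t u = Some tu -> subtree t (u ++ v) = subtree tu v.
Proof.
elim: u t => [|i u IH] [a ts] /=; first by case=> ->.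
case: i => // i; case: ifP => // _; exact: IH.
Qed.

Lemma wr_subtree (rk : A -> nat) (t : tree A) u tu : wr rk t -> subtree t u = Some tu -> wr rk tu.
Proof.
elim: u t => [|i u IH] [a ts]; first by move=> ? [<-].
rewrite wrE /=; case: i => // i; case: ifP => // Hi /andP [_ /(all_nthP (Node a ts)) Ha].
by apply: IH; apply: Ha.
Qed.

Lemma subtree1 (a : A) ts j :
  subtree (Node a ts) [:: j.+1] = if j < size ts then Some (nth (Node a ts) ts j) else None.
Proof. by rewrite /=; case: ifP. Qed.

Lemma labels_ctx (a : A) l s s' l' x :
  List.In x (labels (Node a (l ++ s' :: l'))) ->
  List.In x (labels s') \/ List.In x (labels (Node a (l ++ s :: l'))).
Proof.
rewrite !labelsE /= !map_cat !flatten_cat /= => -[->|]; first by right; left.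
rewrite !In_cat; tauto.
Qed.

Lemma labels_sub (a : A) l s l' x :
  List.In x (labels s) -> List.In x (labels (Node a (l ++ s :: l'))).
Proof.
by rewrite labelsE /= map_cat flatten_cat /= => H; right; rewrite !In_cat; right; left.
Qed.

Lemma map_eq_cat_cons B (f : A -> B) (ts : seq A) (l : seq B) (s : B) (l' : seq B) :
  map f ts = l ++ s :: l' ->
  exists l1 s1 l1', ts = l1 ++ s1 :: l1' /\ map f l1 = l /\ f s1 = s /\ map f l1' = l'.
Proof.
elim: l ts => [|y l IH] [|z ts] //= [<- E].
- by exists [::], z, ts.
- have [l1 [s1 [l1' [-> [<- [<- <-]]]]]] := IH _ E.
  by exists (z :: l1), s1, l1'.
Qed.

End TreeGen.

Lemma wr_tmap A B (rk : A -> nat) (rk' : B -> nat) (f : A -> B) t :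
  (forall x, rk' (f x) = rk x) -> wr rk' (tmap f t) = wr rk t.
Proof.
move=> Hr; elim/tree_ind2: t => a ts IH; rewrite tmapE (wrE rk') (wrE rk) size_map Hr; congr andb.
elim: ts IH => //= x l IHl HF; move/List.Forall_cons_iff: HF => [H1 H2]; rewrite H1 IHl //.
Qed.

Section Relab.
Variables (S X : rankedAlphabet) (R : relabeler S X).

Lemma rl_stateE s ts : rl_state R (Node s ts) = rl_delta R s (map (rl_state R) ts).
Proof. by rewrite /=; congr rl_delta; elim: ts => //= x l ->. Qed.

Lemma relabelE s ts : relabel R (Node s ts) =
  Node (rl_rho R s (rl_state R (Node s ts))) (map (relabel R) ts).
Proof. by rewrite [LHS]/=; congr Node; elim: ts => //= x l ->. Qed.

Lemma subtree_relabel t u : subtree (relabel R t) u = omap (relabel R) (subtree t u).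
Proof.
elim: u t => [|i u IH] [s ts] //; rewrite relabelE /=.
case: i => // i; rewrite size_map; case: ifP => // Hi.
by rewrite (nth_map (Node s ts)) // IH.
Qed.

Definition rlab (t : tree S) : X :=
  let: Node s _ := t in rl_rho R s (rl_state R t).

Lemma lab_relabel t u : lab (relabel R t) u = omap rlab (subtree t u).
Proof.
rewrite /lab subtree_relabel; case: (subtree t u) => //= -[s ts].
by rewrite relabelE.
Qed.

Lemma move_relabel t u d : move (relabel R t) u d = move t u d.
Proof.
case: d => //= i; rewrite subtree_relabel; by case: (subtree t (rcons u i)).
Qed.

End Relab.

Section GenSem.
Variables (S G : rankedAlphabet) (H : uTHM S G).

Definition cleaf (c : config H) : ctree H := Node (inr (Some c)) [::].

Lemma rew1_leaf t c Y : rew1 t (cleaf c) Y -> step t c = Some Y.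
Proof.
move=> Hr; inversion Hr; subst => //.
by case: (l) H2.
Qed.

Lemma peel1 t c Z : clos_refl_trans _ (rew1 t) (cleaf c) Z -> Z <> cleaf c ->
  exists r, step t c = Some r /\ clos_refl_trans _ (rew1 t) r Z.
Proof.
move/clos_rt_rt1n_iff => Hr; inversion Hr; subst => // _.
exists y; split; first exact: rew1_leaf.
exact/clos_rt_rt1n_iff.
Qed.

End GenSem.

Section Mach.
Variables (Sigma Xi Gamma : rankedAlphabet) (H : uTHM Xi Gamma) (R : relabeler Sigma Xi).

Definition PP := rl_P R.
Definition KK := \max_(s : Sigma) @rank Sigma s.
Definition QQ : finType := ((bool + PP) + th_Q H)%type.
Definition MM : finType := (th_M H * option ((bool * KK.-bseq PP) + PP))%type.
Definition Down b : QQ := inl (inl b).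
Definition Up p : QQ := inl (inr p).
Definition Sim q : QQ := inr q.
Definition top' : MM := (th_top H, None).

Definition trans (p : PP) (x : Gamma + (th_Q H * th_M H * dir)) : Gamma + (QQ * MM * dir) :=
  match x with
  | inl g => inl g
  | inr (q', m', d) => inr (Sim q', (m', Some (inr p)), d)
  end.

Definition translate q (s : Sigma) m p :=
  omap (tmap (trans p)) (th_delta H q (rl_rho R s p) m).

Definition mleaf (x : QQ * MM * dir) : tree (Gamma + (QQ * MM * dir)) := Node (inr x) [::].

Definition finish (b : bool) (s : Sigma) (ls : seq PP) :=
  let p := rl_delta R s ls in
  if b then translate (th_qinit H) s (th_top H) p
  else Some (mleaf (Up p, (th_top H, Some (inr p)), None)).

Definition delta' (q' : QQ) (s : Sigma) (mm : MM) : option (tree (Gamma + (QQ * MM * dir))) :=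
  match q' with
  | inl (inl b) =>
      if rank s == 0 then finish b s [::]
      else Some (mleaf (Down false, (th_top H, Some (inl (b, [bseq]))), Some 1))
  | inl (inr p) =>
      match mm.2 with
      | Some (inl (b, ls)) =>
          let ls' := rcons (val ls) p in
          if size ls' < rank s then
            Some (mleaf (Down false, (th_top H, Some (inl (b, insub_bseq KK ls'))), Some (size ls').+1))
          else finish b s ls'
      | _ => None
      end
  | inr q =>
      match mm.2 with
      | Some (inr p) => translate q s mm.1 p
      | _ => None
      end
  end.

Definition H' : uTHM Sigma Gamma := @UTHM Sigma Gamma QQ MM top' (Down true) delta'.

Lemma wf_leaf (s : Sigma) (x : QQ * MM * dir) :
  (if x.2 is Some i then (1 <= i <= rank s) else true) ->
  inTY (mleaf x) /\ forall q' m' d, List.In (inr (q', m', d)) (labels (mleaf x)) ->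
     if d is Some i then (1 <= i <= rank s) else true.
Proof.
move=> Hx; split => // q' m' d /= [E|] //; by move: E Hx => [->].
Qed.

Lemma wf_translate q (s : Sigma) m p r : wf_uTHM H -> wf_relabeler R ->
  translate q s m p = Some r ->
  inTY r /\ forall q' m' d, List.In (inr (q', m', d)) (labels r) ->
     if d is Some i then (1 <= i <= rank s) else true.
Proof.
move=> wH wR; rewrite /translate.
case E: th_delta => [r0|] //= [<-].
have [Hi Hd] := wH _ _ _ _ E.
split.
  rewrite /inTY (wr_tmap (rk := @rankY Gamma _)) //.
  by case=> [|[[]]].
move=> q' m' d Hin; have [x [Hx Ex]] := in_labels_tmap Hin.
case: x Hx Ex => [g|[[q0 m0] d0]] //= Hx [_ _ ->].
by have := Hd _ _ _ Hx; rewrite wR.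
Qed.

Lemma wf_H' : wf_uTHM H -> wf_relabeler R -> wf_uTHM H'.
Proof.
move=> wH wR q s mm r /=.
have Hfin : forall b ls, finish b s ls = Some r -> inTY r /\
  forall q' m' d, List.In (inr (q', m', d)) (labels r) ->
     if d is Some i then (1 <= i <= rank s) else true.
  move=> [] ls /=; first exact: wf_translate.
  by move=> [<-]; apply: wf_leaf.
case: q => [[b|p]|q] /=.
- case: eqP => Hr; first exact: Hfin.
  move=> [<-]; apply: wf_leaf => /=; by case: (rank s) Hr.
- case: mm => m [[[b ls]|p']|] //=.
  case: ifP => Hlt; last exact: Hfin.
  by move=> [<-]; apply: wf_leaf => /=.
- case: mm => m [[[b ls]|p']|] //=; exact: wf_translate.
Qed.

End Mach.

Section Simul.
Variables (Sigma Xi Gamma : rankedAlphabet) (H : uTHM Xi Gamma) (R : relabeler Sigma Xi).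
Variable t : tree Sigma.

Local Notation HH := (H' H R).

Definition proj (c : config HH) : config H :=
  (c.1.1, (match (c.1.2 : QQ H R) with inr q => q | _ => th_qinit H end), fun w => (c.2 w).1).

Definition lift (x : Gamma + option (config HH)) : Gamma + option (config H) :=
  match x with inl g => inl g | inr oc => inr (omap proj oc) end.

Definition good (c : config HH) :=
  (exists q, c.1.2 = @Sim _ _ _ H R q) /\
  forall w tw, subtree t w = Some tw -> (c.2 w).2 = Some (inr (rl_state R tw)).

Definition goodT (T : ctree HH) := forall c, List.In (inr (Some c)) (labels T) -> good c.

Lemma lab_subtree (A : Type) (t0 : tree A) u a ts :
  subtree t0 u = Some (Node a ts) -> lab t0 u = Some a.
Proof. by rewrite /lab => ->. Qed.

Lemma gen_sim u s ts (q' : QQ H R) (mu : seq nat -> MM H R) q (muH : seq nat -> th_M H) :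
  subtree t u = Some (Node s ts) ->
  delta' q' s (mu u) = translate q s (muH u) (rl_state R (Node s ts)) ->
  (forall w, w != u -> muH w = (mu w).1) ->
  (forall w tw, w != u -> subtree t w = Some tw -> (mu w).2 = Some (inr (rl_state R tw))) ->
  @step _ _ H (relabel R t) (u, q, muH) = omap (tmap lift) (@step _ _ HH t (u, q', mu)) /\
  (forall r, @step _ _ HH t (u, q', mu) = Some r -> goodT r).
Proof.
move=> Hsub Hd HmuH Hmu.
rewrite /step (lab_subtree Hsub) lab_relabel Hsub /=.
rewrite Hd /translate.
case E: (th_delta H q _ _) => [r0|] //=.
split.
  congr Some; rewrite !tmap_comp; apply: tmap_ext => -[g|[[q0 m0] d0]] _ //=.
  rewrite move_relabel; case: (move t u d0) => //= u'.
  congr (inr (Some (_, _, _))); apply: functional_extensionality => w.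
  rewrite /upd /=; case: ifP => [//|/negbT Hw]; exact: HmuH.
move=> r [<-] c Hin.
have [x [Hx Ex]] := in_labels_tmap Hin.
have [y [Hy Ey]] := in_labels_tmap Hx.
move: Ex; rewrite {x Hx}Ey; case: y Hy => [g|[[q0 m0] d0]] //= _.
case: (move t u d0) => //= u' [->]; split; first by exists q0.
move=> w tw /=; rewrite /upd; case: eqP => [->|/eqP Hw].
  by rewrite Hsub => -[<-].
exact: Hmu.
Qed.

Lemma sim_step c : good c ->
  @step _ _ H (relabel R t) (proj c) = omap (tmap lift) (@step _ _ HH t c) /\
  (forall r, @step _ _ HH t c = Some r -> goodT r).
Proof.
case: c => [[u q'] mu] [[q /= Eq] Hg]; subst q'.
case Es: (subtree t u) => [[s ts]|].
  apply: (@gen_sim u s ts (Sim R q) mu q (fun w => (mu w).1) Es) => //.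
  - by rewrite /= (Hg _ _ Es).
  - by move=> w tw _; apply: Hg.
by rewrite /step /proj /= lab_relabel /lab Es.
Qed.



Lemma goodT_leaf c ts : goodT (Node (inr (Some c)) ts) -> good c.
Proof. by move=> Hg; apply: Hg; left. Qed.

Lemma fwd1 T1 T2 : @rew1 _ _ HH t T1 T2 -> goodT T1 ->
  @rew1 _ _ H (relabel R t) (tmap lift T1) (tmap lift T2) /\ goodT T2.
Proof.
elim=> [c ts r Hs|a l s s' l' Hr IH] Hg.
  have [E1 E2] := sim_step (goodT_leaf Hg).
  split; last exact: E2.
  rewrite tmapE /=; apply: rew_leaf; by rewrite E1 Hs.
have Hgs : goodT s by move=> c Hc; apply: Hg; apply: labels_sub.
have [IH1 IH2] := IH Hgs.
split.
  rewrite !tmapE !map_cat /=; exact: rew_ctx.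
move=> c /(labels_ctx s) [Hc|Hc]; [exact: IH2 | exact: Hg].
Qed.

Lemma bwd1 T1 T2 : @rew1 _ _ H (relabel R t) T1 T2 ->
  forall T1', T1 = tmap lift T1' -> goodT T1' ->
  exists T2', @rew1 _ _ HH t T1' T2' /\ T2 = tmap lift T2'.
Proof.
elim=> [c ts r Hs|a l s s' l' Hr IH] [a' ts'] E Hg.
  rewrite tmapE in E; case: E => Ea _.
  case: a' Ea Hg => [g|[c'|]] //= [Ec] Hg.
  have [E1 E2] := sim_step (goodT_leaf Hg).
  move: E1; rewrite -Ec Hs; case Es: (@step _ _ HH t c') => [r'|] //= [->].
  by exists r'; split => //; apply: rew_leaf.
rewrite tmapE in E; case: E => Ea Ets.
have [l1 [s1 [l1' [Ets' [El [Es El']]]]]] := map_eq_cat_cons (esym Ets).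
subst ts'.
have Hgs : goodT s1 by move=> c Hc; apply: Hg; apply: labels_sub.
have [s2 [Hr2 Es2]] := IH s1 (esym Es) Hgs.
exists (Node a' (l1 ++ s2 :: l1')); split; first exact: rew_ctx.
by rewrite tmapE map_cat /= El El' Es2 Ea.
Qed.

Lemma fwd_rt T1 T2 : clos_refl_trans _ (@rew1 _ _ HH t) T1 T2 -> goodT T1 ->
  clos_refl_trans _ (@rew1 _ _ H (relabel R t)) (tmap lift T1) (tmap lift T2) /\ goodT T2.
Proof.
elim=> [x y Hxy|x|x y z _ IH1 _ IH2] Hg.
- have [A B] := fwd1 Hxy Hg; split => //; exact: rt_step.
- by split => //; apply: rt_refl.
- have [A B] := IH1 Hg; have [C D] := IH2 B; split => //; exact: rt_trans C.
Qed.

Lemma bwd_rt T1 T2 : clos_refl_trans _ (@rew1 _ _ H (relabel R t)) T1 T2 ->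
  forall T1', T1 = tmap lift T1' -> goodT T1' ->
  exists T2', clos_refl_trans _ (@rew1 _ _ HH t) T1' T2' /\ T2 = tmap lift T2'.
Proof.
move/clos_rt_rt1n_iff; elim=> [x|x y z Hxy _ IH] T1' E Hg.
  by exists T1'; split => //; apply: rt_refl.
have [y' [Hy' Ey]] := bwd1 Hxy E Hg.
have [_ Hgy] := fwd1 Hy' Hg.
have [z' [Hz' Ez]] := IH y' Ey Hgy.
exists z'; split => //; exact: rt_trans (rt_step _ _ _ _ Hy') Hz'.
Qed.

Lemma lift_out T (o : tree Gamma) : tmap lift T = tmap inl o -> T = tmap inl o.
Proof.
elim/tree_ind2: o T => g os IH [a ts]; rewrite !tmapE => -[Ea Ets].
case: a Ea => [g'|[c|]] //= [->]; congr Node.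
elim: os ts IH Ets => [|o os IHo] [|x ts] //= HF [Ex Ets].
move/List.Forall_cons_iff: HF => [H1 H2].
by rewrite (H1 _ Ex) (IHo _ H2 Ets).
Qed.

Lemma lift_inl (o : tree Gamma) : tmap lift (tmap inl o) = tmap inl o.
Proof. by rewrite tmap_comp. Qed.

End Simul.

Section DFS.
Variables (Sigma Xi Gamma : rankedAlphabet) (H : uTHM Xi Gamma) (R : relabeler Sigma Xi).
Variable t : tree Sigma.
Hypothesis Ht : inT t.

Local Notation HH := (H' H R).
Local Notation Top := (th_top H).
Local Notation K := (KK Sigma).
Local Notation cfg := (config HH).

Definition Done (p : PP R) : MM H R := (th_top H, Some (inr p)).

Fixpoint pathP (x : cfg) (cs : seq cfg) : Prop :=
  match cs with
  | [::] => True
  | y :: cs' => step t x = Some (cleaf y) /\ pathP y cs'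
  end.

Lemma pathP_cat x cs1 cs2 : pathP x (cs1 ++ cs2) <-> pathP x cs1 /\ pathP (last x cs1) cs2.
Proof. elim: cs1 x => [|y cs IH] x /=; [tauto | rewrite IH; tauto]. Qed.

Lemma pathP_nth x cs d i : pathP x cs -> i < size cs ->
  step t (nth d (x :: cs) i) = Some (cleaf (nth d (x :: cs) i.+1)).
Proof.
elim: cs x i => [|y cs IH] x [|i] //= [Hs Hp]; rewrite ltnS => Hi //.
exact: (IH y i Hp Hi).
Qed.

Lemma pathP_rt x cs : pathP x cs ->
  clos_refl_trans _ (@rew1 _ _ HH t) (cleaf x) (cleaf (last x cs)).
Proof.
elim: cs x => [|y cs IH] x /=; first by move=> _; apply: rt_refl.
move=> [Hs Hp]; apply: rt_trans (IH _ Hp); apply: rt_step; exact: rew_leaf.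
Qed.

Lemma pathP_peel x cs Z : pathP x cs ->
  clos_refl_trans _ (@rew1 _ _ HH t) (cleaf x) Z -> (forall c, Z <> cleaf c) ->
  clos_refl_trans _ (@rew1 _ _ HH t) (cleaf (last x cs)) Z.
Proof.
elim: cs x => [|y cs IH] x //= [Hs Hp] Hr HZ.
have [r [Er Hr']] := peel1 Hr (HZ x).
rewrite Hs in Er; case: Er => <-{r} in Hr'.
exact: IH.
Qed.

Lemma step_at u s ts (q' : QQ H R) (mu : seq nat -> MM H R) q2 m2 d u' :
  subtree t u = Some (Node s ts) -> delta' q' s (mu u) = Some (mleaf (q2, m2, d)) ->
  move t u d = Some u' ->
  @step _ _ HH t (u, q', mu) = Some (@cleaf _ _ HH (u', q2, @upd _ _ HH mu u m2)).
Proof.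
move=> Hs Hd Hm; rewrite /step (lab_subtree Hs) /=.
by rewrite Hd /= Hm.
Qed.

Lemma move_child u s ts j : subtree t u = Some (Node s ts) -> j < size ts ->
  move t u (Some j.+1) = Some (rcons u j.+1).
Proof.
move=> Hs Hj; rewrite /move -cats1 (subtree_cat _ Hs) subtree1 Hj //.
Qed.

Lemma move_up u j : move t (rcons u j) None = Some u.
Proof.
rewrite /move; case E: (rcons u j) => [|x l]; first by case: u E.
by rewrite -E size_rcons /= -cats1 take_size_cat.
Qed.

Lemma prefix_size (u w : seq nat) : prefix u w -> size u <= size w.
Proof. by move/prefixP => [w' ->]; rewrite size_cat leq_addr. Qed.

Lemma prefix_rcons_uniq (u w : seq nat) i j :
  prefix (rcons u i) w -> prefix (rcons u j) w -> i = j.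
Proof.
move=> /prefixP [a ->] /prefixP [b E].
have := congr1 (fun s => nth 0 s (size u)) E.
by rewrite /= !nth_cat !size_rcons ltnSn !nth_rcons ltnn eqxx.
Qed.

Lemma count_out (p w : seq nat) (L : seq cfg) :
  all (fun c => prefix p (pos c)) L -> ~~ prefix p w ->
  count (fun c => pos c == w) L = 0.
Proof.
move=> Ha Hw; elim: L Ha => //= c L IH /andP [Hc HL]; rewrite IH //.
by case: eqP Hc => // ->; rewrite (negbTE Hw).
Qed.

Lemma rank_le_K (s : Sigma) : rank s <= K.
Proof. exact: (leq_bigmax (F := fun s : Sigma => @rank Sigma s)). Qed.

Definition DFSspec (tu : tree Sigma) (u : seq nat) (b : bool) (mu : seq nat -> MM H R) :=
  exists cs qf muf,
    let x0 : cfg := (u, Down H R b, mu) in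
    pathP x0 cs /\ last x0 cs = (u, qf, muf) /\
    (let: Node s ts := tu in delta' qf s (muf u) = finish H b s (map (rl_state R) ts)) /\
    all (fun c => prefix u (pos c)) (x0 :: cs) /\
    (forall w, count (fun c => pos c == w) (x0 :: cs) <= K.+1) /\
    (forall w, ~~ prefix u w -> muf w = mu w) /\
    (forall v tv, v != [::] -> subtree tu v = Some tv -> muf (u ++ v) = Done (rl_state R tv)) /\
    ((forall w, (mu w).1 = Top) -> forall w, (muf w).1 = Top).

Lemma neq_rcons (u : seq nat) j v : (rcons u j ++ v == u) = false.
Proof.
apply/negbTE/eqP => E; have := congr1 size E.
rewrite size_cat size_rcons; lia.
Qed.

Lemma neq_rcons_cat (u : seq nat) j v : v != [::] -> (rcons u j ++ v == rcons u j) = false.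
Proof.
move=> Hv; apply/negbTE/eqP => E; have := congr1 size E.
rewrite size_cat => Es; move: Hv; rewrite -size_eq0; lia.
Qed.

Lemma dfs_node tu : forall u, subtree t u = Some tu -> forall b mu, DFSspec tu u b mu.
Proof.
elim/tree_ind2: tu => s ts IH u Hsub b mu.
have Hwr : wr (@rank Sigma) (Node s ts) := wr_subtree Ht Hsub.
rewrite wrE in Hwr; case/andP: Hwr => /eqP Hsz _.
have HK : size ts <= K by rewrite Hsz rank_le_K.
have [/size0nil Ets|Hk] := posnP (size ts).
  subst ts; exists [::], (Down H R b), mu.
  split => //; split => //; split; first by rewrite /= -Hsz.
  split; first by rewrite /= prefix_refl.
  split; first by move=> w /=; case: (_ == w).
  split => //; split => //.
  by move=> [|[|i] v] tv.
set ls := map (rl_state R) ts.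
set x0 : cfg := (u, Down H R b, mu).
pose Inv j cs (muj : seq nat -> MM H R) :=
  pathP x0 cs /\
  last x0 cs = (u, Up H (rl_state R (nth (Node s ts) ts j.-1)), muj) /\
  (exists bs : K.-bseq (PP R), muj u = (Top, Some (inl (b, bs))) /\ val bs = take j.-1 ls) /\
  all (fun c => prefix u (pos c)) (x0 :: cs) /\
  (forall w, count (fun c => pos c == w) (x0 :: cs) <=
     (if w == u then j.+1 else if has (fun i => prefix (rcons u i.+1) w) (iota 0 j) then K.+1 else 0)) /\
  (forall w, ~~ prefix u w -> muj w = mu w) /\
  (forall i v tv, i < j -> subtree (nth (Node s ts) ts i) v = Some tv ->
     muj (rcons u i.+1 ++ v) = Done (rl_state R tv)) /\
  ((forall w, (mu w).1 = Top) -> forall w, (muj w).1 = Top).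
pose Pre j cs (nu : seq nat -> MM H R) :=
  pathP x0 cs /\
  step t (last x0 cs) = Some (@cleaf _ _ HH (rcons u j.+1, Down H R false, nu)) /\
  (exists bs : K.-bseq (PP R), nu u = (Top, Some (inl (b, bs))) /\ val bs = take j ls) /\
  all (fun c => prefix u (pos c)) (x0 :: cs) /\
  (forall w, count (fun c => pos c == w) (x0 :: cs) <=
     (if w == u then j.+1 else if has (fun i => prefix (rcons u i.+1) w) (iota 0 j) then K.+1 else 0)) /\
  (forall w, ~~ prefix u w -> nu w = mu w) /\
  (forall i v tv, i < j -> subtree (nth (Node s ts) ts i) v = Some tv ->
     nu (rcons u i.+1 ++ v) = Done (rl_state R tv)) /\
  ((forall w, (mu w).1 = Top) -> forall w, (nu w).1 = Top).
                        
have child : forall j, j < size ts -> (exists cs nu, Pre j cs nu) -> exists cs muj, Inv j.+1 cs muj.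
  move=> j Hj [cs0 [nu [Hp0 [Hst0 [[bs [Hnu Hbs]] [Hall0 [Hcnt0 [Hout0 [Hin0 Htop0]]]]]]]]].
  have Hsubc : subtree t (rcons u j.+1) = Some (nth (Node s ts) ts j).
    by rewrite -cats1 (subtree_cat _ Hsub) subtree1 Hj.
  have HFc := Forall_nth (Node s ts) IH Hj.
  have [cs' [qf' [muf' [Hp' [Hl' [Hd' [Hall' [Hcnt' [Hout' [Hin' Htop']]]]]]]]]] := HFc _ Hsubc false nu.
  move: Hd' Hin' Hsubc; case Etc: (nth (Node s ts) ts j) => [sc tsc] Hd' Hin' Hsubc.
  set p := rl_state R (Node sc tsc).
  have Hfin : finish H false sc (map (rl_state R) tsc) = Some (mleaf (Up H p, Done p, None)).
    by rewrite /finish /p rl_stateE.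
  rewrite Hfin in Hd'.
  have Hstc := step_at Hsubc Hd' (move_up u j.+1).
  set muj := @upd _ _ HH muf' (rcons u j.+1) (Done p) in Hstc.
  set y : cfg := (rcons u j.+1, Down H R false, nu).
  exists (cs0 ++ y :: rcons cs' (u, Up H p, muj)), muj.
  have Hnp : ~~ prefix (rcons u j.+1) u.
    by apply/negP => /prefix_size; rewrite size_rcons ltnn.
  split.
    apply/pathP_cat; split => //; rewrite /= Hst0; split => //.
    rewrite -cats1; apply/pathP_cat; split => //; rewrite Hl' /=; split => //.
  split; first by rewrite last_cat /= last_rcons /= Etc.
  split.
    exists bs; split => //; rewrite /muj /upd.
    have -> : (u == rcons u j.+1) = false.
      by apply/negbTE; apply: contra Hnp => /eqP <-; rewrite prefix_refl.
    by rewrite Hout'.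
  split.
    rewrite -cat_cons all_cat Hall0 /= prefix_rcons all_rcons /= prefix_refl /=.
    move: Hall' => /= /andP [_ Hall']; apply: sub_all Hall' => c; exact/prefix_trans/prefix_rcons.
  split.
    move=> w.
    have -> : x0 :: (cs0 ++ y :: rcons cs' (u, Up H p, muj)) =
              (x0 :: cs0) ++ (y :: cs') ++ [:: (u, Up H p, muj)] by rewrite /= cats1.
    rewrite !count_cat.
    have Ec : count (fun c : cfg => pos c == w) [:: (u, Up H p, muj)] = (u == w) by rewrite /= addn0.
    rewrite Ec.
    have Hiota : iota 0 j.+1 = iota 0 j ++ [:: j] by rewrite -addn1 iotaD.
    have [Ewu|Hwu] := eqVneq w u.
      subst w; rewrite (count_out Hall' Hnp) add0n.
      have := Hcnt0 u; rewrite eqxx => H0.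
      by rewrite addn1 ltnS.
    rewrite addn0.
    have := Hcnt0 w; rewrite (negbTE Hwu) Hiota has_cat /= orbF => H0.
    case Hpw: (prefix (rcons u j.+1) w).
      have Hnh : has (fun i => prefix (rcons u i.+1) w) (iota 0 j) = false.
        apply/negbTE/hasPn => i; rewrite mem_iota => /andP [_ Hi]; apply/negP => Hpi.
        have := prefix_rcons_uniq Hpi Hpw => -[Eij]; by rewrite Eij ltnn in Hi.
      rewrite Hnh /= in H0 *; rewrite leqn0 in H0; rewrite (eqP H0) add0n.
      exact: Hcnt'.
    have E0 : count (fun c : cfg => pos c == w) (y :: cs') = 0 := count_out Hall' (negbT Hpw).
    move: E0 => /= ->; rewrite addn0 orbF; exact: H0.
  split.
    move=> w Hw; rewrite /muj /upd.
    have -> : (w == rcons u j.+1) = false.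
      apply/negbTE; apply: contra Hw => /eqP ->; exact: prefix_rcons.
    rewrite Hout' ?Hout0 //; apply: contra Hw; exact/prefix_trans/prefix_rcons.
  split.
    move=> i v tv; rewrite ltnS leq_eqVlt => /orP [/eqP Ei|Hi] Hv.
      subst i; rewrite Etc in Hv.
      have [Ev|Hv0] := eqVneq v [::].
        subst v; move: Hv => /= [<-]; by rewrite cats0 /muj /upd eqxx.
      by rewrite /muj /upd neq_rcons_cat // (Hin' v tv).
    have Hpw : prefix (rcons u i.+1) (rcons u i.+1 ++ v) by apply: prefix_prefix.
    have Hnpw : ~~ prefix (rcons u j.+1) (rcons u i.+1 ++ v).
      apply/negP => Hq; have := prefix_rcons_uniq Hpw Hq => -[Eij]; by rewrite Eij ltnn in Hi.
    rewrite /muj /upd.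
    have -> : (rcons u i.+1 ++ v == rcons u j.+1) = false.
      apply/negbTE; apply: contra Hnpw => /eqP ->; exact: prefix_refl.
    by rewrite Hout' // (Hin0 i v tv).
  move=> Hmu w; rewrite /muj /upd; case: ifP => // _; exact: Htop' (Htop0 Hmu) w.
                             
have up : forall j, j.+1 < size ts -> (exists cs muj, Inv j.+1 cs muj) -> exists cs nu, Pre j.+1 cs nu.
  move=> j Hj [cs [muj [Hp [Hl [[bs [Hmu Hbs]] [Hall [Hcnt [Hout [Hin Htop]]]]]]]]].
  set pj := rl_state R (nth (Node s ts) ts j).
  have Els : rcons (take j ls) pj = take j.+1 ls.
    rewrite (take_nth (rl_state R (Node s ts))) ?size_map ?(ltnW Hj) //.
    by rewrite (nth_map (Node s ts)) // ltnW.
  have Hsz1 : size (take j.+1 ls) = j.+1 by rewrite size_takel // size_map ltnW.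
  set nb := insub_bseq K (take j.+1 ls).
  have Hd : delta' (Up H pj) s (muj u) =
      Some (mleaf (Down H R false, (Top, Some (inl (b, nb))), Some j.+2)).
    by rewrite /= Hmu /= Hbs Els size_takel ?size_map ?(ltnW Hj) // -Hsz Hj.
  have Hst := step_at Hsub Hd (move_child Hsub Hj).
  exists cs, (@upd _ _ HH muj u (Top, Some (inl (b, nb)))).
  split => //.
  split; first by rewrite Hl.
  split.
    exists nb; split; first by rewrite /upd eqxx.
    rewrite /nb /insub_bseq insubdK //.
    rewrite unfold_in /= size_takel ?size_map ?(ltnW Hj) //; exact: leq_trans (ltnW Hj) HK.
  split => //.
  split => //.
  split.
    move=> w Hw; rewrite /upd.
    have -> : (w == u) = false by apply/negbTE; apply: contra Hw => /eqP ->; exact: prefix_refl.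
    exact: Hout.
  split.
    by move=> i v tv Hi Hv; rewrite /upd neq_rcons; apply: Hin.
  move=> Hm w; rewrite /upd; case: ifP => // _; exact: Htop.
                 
have pre0 : exists cs nu, Pre 0 cs nu.
  have Hd : delta' (Down H R b) s (mu u) =
      Some (mleaf (Down H R false, (Top, Some (inl (b, [bseq] : K.-bseq (PP R)))), Some 1)).
    by rewrite /= -Hsz; case: (size ts) Hk.
  have Hst := step_at Hsub Hd (move_child Hsub Hk).
  exists [::], (@upd _ _ HH mu u (Top, Some (inl (b, [bseq] : K.-bseq (PP R))))).
  split => //.
  split => //.
  split; first by exists [bseq]; rewrite /upd eqxx take0.
  split; first by rewrite /= prefix_refl.
  split; first by move=> w /=; case: (eqVneq w u).
  split.
    move=> w Hw; rewrite /upd.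
    have -> : (w == u) = false by apply/negbTE; apply: contra Hw => /eqP ->; exact: prefix_refl.
    by [].
  split => //.
  move=> Hm w; rewrite /upd; case: ifP => // _; exact: Hm.
have loop : forall j, j < size ts -> exists cs muj, Inv j.+1 cs muj.
  elim=> [|j IHj] Hj; first exact: child.
  apply: child => //; apply: up => //; exact: IHj (ltnW Hj).
have := loop (size ts).-1; rewrite (prednK Hk) => /(_ (leqnn _)).
move=> [cs [muk [Hp [Hl [[bs [Hmu Hbs]] [Hall [Hcnt [Hout [Hin Htop]]]]]]]]].
set pk := rl_state R (nth (Node s ts) ts (size ts).-1).
exists cs, (Up H pk), muk.
split => //; split => //.
split.
  have Els : rcons (take (size ts).-1 ls) pk = ls.
    have -> : pk = nth (rl_state R (Node s ts)) ls (size ts).-1.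
      by rewrite /pk /ls (nth_map (Node s ts)) // prednK.
    rewrite -take_nth; last by rewrite /ls size_map prednK.
    by rewrite prednK // /ls -(size_map (rl_state R) ts) take_size.
  by rewrite /= Hmu /= Hbs Els size_map -Hsz ltnn.
split => //.
split.
  move=> w; apply: leq_trans (Hcnt w) _.
  by case: (w == u); [rewrite ltnS | case: has].
split => //.
split => //.
move=> [|[|i] v] tv //= _; case: ifP => // Hi Hv.
by rewrite -cat_rcons; apply: Hin.
Qed.


Lemma root_setup : exists cs qf muf,
  let x0 := init_config HH in
  pathP x0 cs /\ last x0 cs = ([::], qf, muf) /\
  (forall w, count (fun c => pos c == w) (x0 :: cs) <= K.+1) /\
  @step _ _ H (relabel R t) (init_config H) =
     omap (tmap (@lift _ _ _ H R)) (step t ([::], qf, muf)) /\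
  (forall r, step t ([::], qf, muf) = Some r -> goodT t r).
Proof.
have [cs [qf [muf [Hp [Hl [Hd [Hall [Hcnt [Hout [Hin Htop]]]]]]]]]] :=
  @dfs_node t [::] erefl true (fun _ => top' H R).
exists cs, qf, muf; split => //; split => //; split => //.
move: Hd Hin; case Et: t => [s ts] Hd Hin.
have Hsub : subtree t [::] = Some (Node s ts) by rewrite Et.
rewrite -Et.
apply: (@gen_sim _ _ _ H R t [::] s ts qf muf (th_qinit H) (fun _ => th_top H) Hsub).
- by rewrite Hd /finish rl_stateE.
- by move=> w _; rewrite Htop.
- move=> w tw Hw Hs; rewrite Et in Hs; by rewrite -[w]cat0s (Hin w tw Hw Hs).
Qed.

End DFS.

Lemma count_prefix T (P : pred T) (s D : seq T) d :
  size s <= size D -> (forall i, i < size s -> nth d s i = nth d D i) ->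
  count P s <= count P D.
Proof.
move=> Hs Hn.
have -> : s = take (size s) D.
  apply: (eq_from_nth (x0 := d)); first by rewrite size_takel.
  by move=> i Hi; rewrite nth_take // Hn.
by rewrite -[X in _ <= count _ X](cat_take_drop (size s) D) count_cat leq_addr.
Qed.

Theorem mainTheorem18 (Sigma Xi Gamma : rankedAlphabet)
  (H : uTHM Xi Gamma) (R : relabeler Sigma Xi) :
  wf_uTHM H -> wf_relabeler R ->
  { H' : uTHM Sigma Gamma |
    wf_uTHM H' /\
    (forall t : tree Sigma, inT t ->
       forall o : tree Gamma, sem H' t o <-> sem H (relabel R t) o) /\
    (forall L : tree Sigma -> Prop, (forall t, L t -> inT t) ->
       bounded_visit H (fun s => exists t, L t /\ s = relabel R t) ->
       bounded_visit H' L) }.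
Proof.
move=> wH wR.
exists (H' H R); split; first exact: wf_H'.
split.
  move=> t Ht o.
  have [cs [qf [muf [Hp [Hl [Hcnt [E1 E2]]]]]]] := @root_setup _ _ _ H R t Ht.
  have Hnl : forall c, tmap inl o <> @cleaf _ _ (H' H R) c by case: o => g os c; rewrite tmapE.
  have HnlH : forall c, tmap inl o <> @cleaf _ _ H c by move=> c; clear Hnl; case: o => g os; rewrite tmapE.
  split.
    move=> Hs.
    have := pathP_peel Hp Hs Hnl; rewrite Hl => Hr.
    have [r [Er Hr2]] := peel1 Hr (Hnl _).
    rewrite Er /= in E1.
    have [Hf _] := fwd_rt Hr2 (E2 _ Er); rewrite lift_inl in Hf.
    apply: rt_trans Hf; apply: rt_step; exact: rew_leaf.
  move=> Hs.
  have [r [Er Hr2]] := peel1 Hs (HnlH _).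
  rewrite Er in E1.
  case Ef: (step t ([::], qf, muf)) => [r'|]; rewrite Ef /= in E1; last by [].
  case: E1 => Er'.
  have [T2 [HT2 ET2]] := bwd_rt Hr2 Er' (E2 _ Ef).
  have ET := lift_out (esym ET2).
  rewrite /sem; apply: rt_trans (pathP_rt Hp) _; rewrite Hl.
  apply: rt_trans (rt_step _ _ _ _ (rew_leaf _ Ef)) _; by rewrite -ET.
move=> L HL [N HN]; exists (N + (KK Sigma).+1) => t Lt cs Hrun u.
have Ht := HL t Lt.
have [csd [qf [muf [Hp [Hl [Hcnt [E1 E2]]]]]]] := @root_setup _ _ _ H R t Ht.
set x0 := init_config (H' H R) in Hp Hl Hcnt.
set D := x0 :: csd.
set n := size D.
case: Hrun => [[c0 [cs' [Ecs Ec0]]] Hst].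
have A : forall i, i < n -> i < size cs -> nth x0 cs i = nth x0 D i.
  elim=> [|i IH] Hi Hc; first by rewrite Ecs Ec0.
  have [r [Er Hin]] := Hst i Hc.
  rewrite IH ?(ltnW Hi) ?(ltnW Hc) // in Er.
  rewrite (pathP_nth x0 Hp) in Er; last by rewrite -ltnS.
  by case: Er => <-{r} in Hin; case: Hin => // -[].
have Hcf : size csd < size cs -> nth x0 cs (size csd) = ([::], qf, muf).
  move=> Hs; rewrite A //.
  by rewrite /D -Hl -[size csd]/((size (x0 :: csd)).-1) nth_last.
have B : forall k, n + k < size cs -> good t (nth x0 cs (n + k)).
  elim=> [|k IH] Hk.
    rewrite addn0 in Hk *.
    have [r [Er Hin]] := Hst (size csd) Hk.
    rewrite Hcf ?(ltnW Hk) // in Er.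
    exact: E2 _ Er _ Hin.
  have Hk' : n + k < size cs by apply: ltnW; rewrite -addnS.
  have Hg := IH Hk'.
  have [_ G2] := sim_step Hg.
  have Hc1 : (n + k).+1 < size cs by rewrite -addnS.
  have [r [Er Hin]] := Hst (n + k) Hc1.
  by rewrite addnS; exact: G2 _ Er _ Hin.
pose hrun := init_config H :: map (@proj _ _ _ H R) (drop n cs).
have Hhrun : is_run (relabel R t) hrun.
  split; first by exists (init_config H), (map (@proj _ _ _ H R) (drop n cs)).
  move=> i; rewrite /hrun /= size_map size_drop ltnS => Hi.
  have Hni : n + i < size cs by rewrite -ltn_subRL.
  have Enth : nth (init_config H) (map (@proj _ _ _ H R) (drop n cs)) i = proj (nth x0 cs (n + i)).
    by rewrite (nth_map x0) ?size_drop // nth_drop.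
  case: i Hi Hni Enth => [|k] Hi Hni Enth /=.
    rewrite addn0 in Hni Enth.
    have [r [Er Hin]] := Hst (size csd) Hni.
    rewrite Hcf ?(ltnW Hni) // in Er.
    rewrite Er /= in E1; exists (tmap (@lift _ _ _ H R) r); split => //.
    rewrite Enth; exact: (in_tmap_labels (@lift _ _ _ H R) Hin).
  have Hk : n + k < size cs by apply: ltnW; rewrite -addnS.
  have Hg := B k Hk.
  have [G1 _] := sim_step Hg.
  have Hc1 : (n + k).+1 < size cs by rewrite -addnS.
  have [r [Er Hin]] := Hst (n + k) Hc1.
  rewrite (nth_map x0) ?size_drop ?nth_drop; last by rewrite ltn_subRL.
  rewrite Er /= in G1; exists (tmap (@lift _ _ _ H R) r); split => //.
  rewrite Enth addnS; exact: (in_tmap_labels (@lift _ _ _ H R) Hin).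
have HN' := HN (relabel R t) (ex_intro _ t (conj Lt erefl)) hrun Hhrun u.
rewrite -(cat_take_drop n cs) count_cat addnC.
apply: leq_add.
  apply: leq_trans HN'.
  rewrite /hrun /= count_map; apply: leq_addl.
apply: leq_trans (Hcnt u).
apply: (@count_prefix _ _ _ _ x0).
  by rewrite size_take; case: ifP => H1 //; move/negbT: H1; rewrite -leqNgt.
move=> i; rewrite size_take => Hi.
have [Hn Hc] : i < n /\ i < size cs.
  case: ifP Hi => H1 Hi; first by split => //; apply: ltn_trans Hi H1.
  by split => //; apply: leq_trans Hi _; move/negbT: H1; rewrite -leqNgt.
by rewrite nth_take // A.
Qed.
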